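(* Let $\nu=\sum_{i=1}^kw_i\delta_{\mu_i}$ and $\hat\nu=\sum_{i=1}^k\hat w_i\delta_{\hat\mu_i}$ be probability distributions on $\mathbb{R}$, and suppose $W_1(\nu,\hat\nu)<\epsilon$. Let \[\epsilon_1=\min\{|\mu_i-\mu_j|,|\hat\mu_i-\hat\mu_j|:1\le i<j\le k\},\qquad \epsilon_2=\min\{w_i,\hat w_i:i\in[k]\}.\] If $\epsilon<\epsilon_1\epsilon_2/4$, then there exists a permutation $\Pi$ such that \[\|\mu-\Pi\hat\mu\|_\infty<\epsilon/\epsilon_2,\qquad \|w-\Pi\hat w\|_\infty<2\epsilon/\epsilon_1,\] where $\mu=(\mu_1,\dots,\mu_k)$, $w=(w_1,\dots,w_k)$, and $\hat\mu,\hat w$ are defined analogously.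
   Context: $W_1$ is the 1-Wasserstein distance: $W_1(\nu,\nu')=\inf\mathbb{E}|X-Y|$ over couplings with $X\sim\nu$, $Y\sim\nu'$. *)

(* Defs.v *)
From HB Require Import structures.
From mathcomp Require Import all_boot all_order all_algebra all_fingroup.
From mathcomp Require Import all_classical all_reals.
Set Implicit Arguments. Unset Strict Implicit. Unset Printing Implicit Defensive.
Import Order.TTheory GRing.Theory Num.Theory.
Local Open Scope ring_scope.
Local Open Scope classical_set_scope.

(* Finitely supported distribution nu = sum_i w i delta_{mu i} on R,
   atoms indexed by 'I_k. *)

Definition is_prob_weights (R : realType) (k : nat) (w : 'I_k -> R) : Prop :=
  (forall i, 0 <= w i) /\ \sum_(i < k) w i = 1.

Definition is_coupling (R : realType) (k : nat) (w wh : 'I_k -> R)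
    (P : 'I_k -> 'I_k -> R) : Prop :=
  [/\ forall i j, 0 <= P i j,
      forall i, \sum_(j < k) P i j = w i &
      forall j, \sum_(i < k) P i j = wh j].

Definition coupling_cost (R : realType) (k : nat) (mu muh : 'I_k -> R)
    (P : 'I_k -> 'I_k -> R) : R :=
  \sum_(i < k) \sum_(j < k) P i j * `|mu i - muh j|.

Definition W1 (R : realType) (k : nat) (w : 'I_k -> R) (mu : 'I_k -> R)
    (wh : 'I_k -> R) (muh : 'I_k -> R) : R :=
  inf [set c : R | exists P, is_coupling w wh P /\ c = coupling_cost mu muh P].

Definition eps1 (R : realType) (k : nat) (mu muh : 'I_k -> R) : R :=
  inf [set d : R | exists i j : 'I_k, (i < j)%N /\
                   (d = `|mu i - mu j| \/ d = `|muh i - muh j|)].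

Definition eps2 (R : realType) (k : nat) (w wh : 'I_k -> R) : R :=
  inf [set d : R | exists i : 'I_k, d = w i \/ d = wh i].

Definition norminf (R : realType) (k : nat) (v : 'I_k -> R) : R :=
  \big[Num.max/0]_(i < k) `|v i|.

(* Main.v *)
Require Import Defs.
From HB Require Import structures.
From mathcomp Require Import all_boot all_order all_algebra all_fingroup.
From mathcomp Require Import all_classical all_reals.
From mathcomp Require Import lra.
Import Order.TTheory GRing.Theory Num.Theory.
Local Open Scope ring_scope.
Local Open Scope classical_set_scope.

Lemma norminf_lt (R : realType) (k : nat) (v : 'I_k -> R) (b : R) :
  0 < b -> (forall i, `|v i| < b) -> norminf v < b.
Proof.
move=> b0 H; rewrite /norminf; apply: (big_ind (fun x => x < b)) => //.
  by move=> x y hx hy; rewrite gt_max hx hy.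
Qed.

Theorem lemma1 (R : realType) (k : nat) (hk : (1 < k)%N)
    (w mu wh muh : 'I_k -> R) (eps : R) :
  is_prob_weights w -> is_prob_weights wh ->
  W1 w mu wh muh < eps ->
  eps < eps1 mu muh * eps2 w wh / 4 ->
  exists Pi : {perm 'I_k},
    norminf (fun i => mu i - muh (Pi i)) < eps / eps2 w wh /\
    norminf (fun i => w i - wh (Pi i)) < 2 * eps / eps1 mu muh.
Proof.
move=> [w0 w1] [wh0 wh1] hW heps.
set e1 := eps1 mu muh; set e2 := eps2 w wh.
pose i0 : 'I_k := Ordinal (ltnW hk).
pose i1 : 'I_k := Ordinal hk.
have lb1 : has_lbound [set d : R | exists i j : 'I_k, (i < j)%N /\
                   (d = `|mu i - mu j| \/ d = `|muh i - muh j|)].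
  by exists 0 => d [i [j [_ [->|->]]]].
have e1lb : forall i j, i != j -> e1 <= `|mu i - mu j| /\ e1 <= `|muh i - muh j|.
  move=> i j; rewrite neq_ltn => /orP[] lij.
    by split; apply: (ge_inf lb1); exists i, j; split => //; [left|right].
  by rewrite (distrC (mu i)) (distrC (muh i)); split; apply: (ge_inf lb1);
    exists j, i; split => //; [left|right].
have lb2 : has_lbound [set d : R | exists i : 'I_k, d = w i \/ d = wh i].
  by exists 0 => d [i [->|->]].
have e2lb : forall i, e2 <= w i /\ e2 <= wh i.
  by move=> i; split; apply: (ge_inf lb2); exists i; [left|right].
have e1ge0 : 0 <= e1.
  apply: lb_le_inf; first by exists `|mu i0 - mu i1|, i0, i1; split => //; left.
  by move=> d [i [j [_ [->|->]]]].
have e2ge0 : 0 <= e2.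
  apply: lb_le_inf; first by exists (w i0), i0; left.
  by move=> d [i [->|->]].
have ne : [set c : R | exists P, is_coupling w wh P /\ c = coupling_cost mu muh P] !=set0.
  exists (coupling_cost mu muh (fun i j => w i * wh j)), (fun i j => w i * wh j).
  split => //; split.
  - by move=> i j; rewrite mulr_ge0.
  - by move=> i; rewrite -mulr_sumr wh1 mulr1.
  - by move=> j; rewrite -mulr_suml w1 mul1r.
have W0 : 0 <= W1 w mu wh muh.
  apply: lb_le_inf => // c [P [[P0 _ _] ->]].
  by apply: sumr_ge0 => i _; apply: sumr_ge0 => j _; rewrite mulr_ge0.
have eps0 : 0 < eps by apply: le_lt_trans hW.
have hpos : 0 < e1 * e2 / 4 by apply: lt_trans heps.
have e1p : 0 < e1.
  rewrite lt_neqAle e1ge0 andbT; apply/eqP => E; move: hpos.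
  by rewrite -E !mul0r ltxx.
have e2p : 0 < e2.
  rewrite lt_neqAle e2ge0 andbT; apply/eqP => E; move: hpos.
  by rewrite -E mulr0 mul0r ltxx.
have [_ [P [[P0 Prow Pcol] ->]] hc] := inf_lt ne hW.
set cost := coupling_cost mu muh P in hc.
have ci_le : forall i, \sum_(j < k) P i j * `|mu i - muh j| <= cost.
  move=> i; rewrite /cost /coupling_cost [X in _ <= X](bigD1 i) //= lerDl.
  by apply: sumr_ge0 => i' _; apply: sumr_ge0 => j _; rewrite mulr_ge0.
have dj_le : forall j, \sum_(i < k) P i j * `|mu i - muh j| <= cost.
  move=> j; rewrite /cost /coupling_cost exchange_big [X in _ <= X](bigD1 j) //= lerDl.
  by apply: sumr_ge0 => i' _; apply: sumr_ge0 => j' _; rewrite mulr_ge0.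
set delta := eps / e2.
have dp : 0 < delta by rewrite divr_gt0.
have dlt : delta < e1 / 4.
  by rewrite /delta ltr_pdivrMr // mulrAC.
have ex : forall i, exists j, `|mu i - muh j| < delta.
  move=> i; apply: contrapT => /forallNP H.
  have H' : forall j, delta <= `|mu i - muh j|.
    by move=> j; move/negP: (H j); rewrite -leNgt.
  have : eps <= cost.
    apply: (le_trans _ (ci_le i)).
    have -> : eps = e2 * delta by rewrite mulrC divfK // gt_eqF.
    apply: (le_trans (y := w i * delta)).
      by apply: ler_wpM2r; [exact: ltW | case: (e2lb i)].
    rewrite -Prow mulr_suml; apply: ler_sum => j _.
    by rewrite ler_wpM2l.
  by rewrite leNgt hc.
have [sigma hsig] := choice ex.
have inj : injective sigma.
  move=> i i' E; apply/eqP; apply/negPn/negP => neq.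
  have [h1 _] := e1lb _ _ neq.
  have := ler_distD (muh (sigma i)) (mu i) (mu i').
  have := hsig i; have := hsig i'; rewrite -E (distrC (mu i')).
  lra.
exists (perm inj); split.
  by apply: norminf_lt => // i; rewrite permE; exact: hsig.
apply: norminf_lt; first by rewrite divr_gt0 // mulr_gt0.
move=> i; rewrite permE.
set A := \sum_(j < k | j != sigma i) P i j.
set B := \sum_(i' < k | i' != i) P i' (sigma i).
have wA : w i = P i (sigma i) + A by rewrite -Prow (bigD1 (sigma i)).
have wB : wh (sigma i) = P i (sigma i) + B by rewrite -Pcol (bigD1 i).
have A0 : 0 <= A by apply: sumr_ge0.
have B0 : 0 <= B by apply: sumr_ge0.
have Ale : A * e1 <= 2 * cost.
  rewrite /A mulr_suml.
  apply: (le_trans (y := 2 * \sum_(j < k | j != sigma i) P i j * `|mu i - muh j|)).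
    rewrite mulr_sumr; apply: ler_sum => j hj.
    rewrite mulrCA ler_wpM2l //.
    have [_ h1] := e1lb _ _ hj.
    have := ler_distD (mu i) (muh j) (muh (sigma i)).
    have := hsig i; rewrite (distrC (muh j) (mu i)); lra.
  rewrite ler_pM2l //; apply: le_trans (ci_le i).
  rewrite [X in _ <= X](bigD1 (sigma i)) //= lerDr.
  by rewrite mulr_ge0.
have Ble : B * e1 <= 2 * cost.
  rewrite /B mulr_suml.
  apply: (le_trans (y := 2 * \sum_(i' < k | i' != i) P i' (sigma i) * `|mu i' - muh (sigma i)|)).
    rewrite mulr_sumr; apply: ler_sum => j hj.
    rewrite mulrCA ler_wpM2l //.
    have [h1 _] := e1lb _ _ hj.
    have := ler_distD (muh (sigma i)) (mu j) (mu i).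
    have := hsig i; rewrite (distrC (muh (sigma i)) (mu i)); lra.
  rewrite ler_pM2l //; apply: le_trans (dj_le (sigma i)).
  rewrite [X in _ <= X](bigD1 i) //= lerDr.
  by rewrite mulr_ge0.
have m_lt : 2 * cost / e1 < 2 * eps / e1.
  by rewrite ltr_pM2r ?invr_gt0 //; lra.
have Am : A <= 2 * cost / e1 by rewrite ler_pdivlMr.
have Bm : B <= 2 * cost / e1 by rewrite ler_pdivlMr.
rewrite wA wB ltr_norml; apply/andP; split; lra.
Qed.
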